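(* If the global optional splitting formula holds at $\tau$ with respect to $\mathbb{F}$, then for every $t\ge0$, $\mathcal{G}_t=\mathcal{N}\vee\sigma(\tau\nmid t)\vee\mathcal{F}_t$.
   Context: Let $(\Omega,\mathcal{A},\mathbb{Q})$ be a probability space with a right-continuous filtration $\mathbb{F}=(\mathcal{F}_t)_{t\ge0}$ such that $\mathcal{F}_0$ contains $\mathcal{N}^{\mathcal{F}_\infty}$, where for a $\sigma$-algebra $\mathcal{T}\subset\mathcal{A}$, $\mathcal{N}^{\mathcal{T}}$ denotes the $\sigma$-algebra generated by all subsets of $\mathcal{T}$-measurable $\mathbb{Q}$-null sets. Let $\tau$ be a random variable with values in $[0,\infty]$, let $\mathcal{N}=\mathcal{N}^{\sigma(\tau)\vee\mathcal{F}_\infty}$, and let $\mathbb{G}=(\mathcal{G}_t)_{t\ge0}$ with $\mathcal{G}_t=\mathcal{N}\vee\bigcap_{s>t}(\mathcal{F}_s\vee\sigma(\tau\wedge s))$. Identities between processes are understood up to indistinguishability outside an $\mathcal{N}$-measurable $\mathbb{Q}$-null set. For a function $Y''$ on $[0,\infty]\times(\mathbb{R}_+\times\Omega)$, $Y''(\tau)$ denotes the process $(t,\omega)\mapsto Y''(\tau(\omega),t,\omega)$. The global optional splitting formula at $\tau$ (with respect to $\mathbb{F}$) holds if for every $\mathbb{G}$-optional process $Y$ there exist $Y'\in\mathcal{O}(\mathbb{F})$ and a $\mathcal{B}[0,\infty]\otimes\mathcal{O}(\mathbb{F})$-measurable function $Y''$ on $[0,\infty]\times(\mathbb{R}_+\times\Omega)$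 with $Y=Y'\mathbf{1}_{[0,\tau)}+Y''(\tau)\mathbf{1}_{[\tau,\infty)}$. For $a,b\in[0,\infty]$, $a\nmid b=a$ if $a\le b$ and $a\nmid b=\infty$ if $a>b$. *)

(* Defs.v *)
From HB Require Import structures.
From mathcomp Require Import all_boot all_order all_algebra.
From mathcomp Require Import all_classical all_reals all_analysis measurable_realfun.
Set Implicit Arguments. Unset Strict Implicit. Unset Printing Implicit Defensive.
Import Order.TTheory GRing.Theory Num.Theory.
Import numFieldNormedType.Exports.
Local Open Scope classical_set_scope.
Local Open Scope ring_scope.

Section Defs.
Context (R : realType) (d : measure_display) (Omega : measurableType d).

Definition sjoin (A B : set (set Omega)) : set (set Omega) := <<s A `|` B >>.

Definition sigma_of (f : Omega -> \bar R) : set (set Omega) :=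
  [set f @^-1` B | B in [set B : set (\bar R) | measurable B]].

Definition null_sigma (Q : probability Omega R) (T : set (set Omega)) :
  set (set Omega) :=
  <<s [set B | exists C, T C /\ Q C = 0%E /\ B `<=` C] >>.

Definition Finfty (F : R -> set (set Omega)) : set (set Omega) :=
  <<s \bigcup_(t in `[0, +oo[%classic) F t >>.

Definition Tsig (F : R -> set (set Omega)) (tau : Omega -> \bar R) :=
  sjoin (sigma_of tau) (Finfty F).

Definition Nsig (Q : probability Omega R) (F : R -> set (set Omega))
  (tau : Omega -> \bar R) : set (set Omega) := null_sigma Q (Tsig F tau).

Definition Gfilt (Q : probability Omega R) (F : R -> set (set Omega))
  (tau : Omega -> \bar R) (t : R) : set (set Omega) :=
  sjoin (Nsig Q F tau)
    (\bigcap_(s in `]t, +oo[%classic)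
        sjoin (F s) (sigma_of (fun w => Order.min (tau w) s%:E))).

Definition nmid (a b : \bar R) : \bar R := if (a <= b)%E then a else +oo%E.

(* Processes are indexed by R; only times t >= 0 matter. *)
Definition cadlag_adapted (H : R -> set (set Omega)) (X : R -> Omega -> R) :=
  (forall w (t : R), 0 <= t ->
      (fun s => X s w) @ t^'+ --> X t w) /\
  (forall w (t : R), 0 < t -> cvg ((fun s => X s w) @ t^'-)) /\
  (forall (t : R), 0 <= t -> forall B : set R, measurable B ->
      H t [set w | B (X t w)]).

(* optional sigma-algebra O(H) on R_+ x Omega (realized on R x Omega:
   only the trace on {t >= 0} matters), generated by the cadlag H-adapted
   real-valued processes *)
Definition optional_sigma (H : R -> set (set Omega)) : set (set (R * Omega)) :=
  <<s [set S | exists (X : R -> Omega -> R) (B : set R),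
          cadlag_adapted H X /\ measurable B /\
          S = [set p : R * Omega | 0 <= p.1 /\ B (X p.1 p.2)]] >>.

Definition is_optional (H : R -> set (set Omega)) (Y : R -> Omega -> R) :=
  forall B : set R, measurable B ->
    optional_sigma H [set p : R * Omega | 0 <= p.1 /\ B (Y p.1 p.2)].

Definition prod_borel_optional (H : R -> set (set Omega)) :
  set (set (\bar R * (R * Omega))) :=
  <<s [set S | exists (A : set (\bar R)) (O : set (R * Omega)),
          measurable A /\ optional_sigma H O /\
          S = [set q | A q.1 /\ O q.2]] >>.

Definition is_prod_measurable (H : R -> set (set Omega))
  (Y2 : \bar R -> R -> Omega -> R) :=
  forall B : set R, measurable B ->
    prod_borel_optional H
      [set q | (0 <= q.1)%E /\ 0 <= q.2.1 /\ B (Y2 q.1 q.2.1 q.2.2)].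

End Defs.

Definition global_optional_splitting {R : realType} {d : measure_display}
  {Omega : measurableType d} (Q : probability Omega R)
  (F : R -> set (set Omega)) (tau : Omega -> \bar R) : Prop :=
  forall Y : R -> Omega -> R, is_optional (Gfilt Q F tau) Y ->
  exists (Y1 : R -> Omega -> R) (Y2 : \bar R -> R -> Omega -> R),
    is_optional F Y1 /\ is_prod_measurable F Y2 /\
    (* identity up to indistinguishability outside an N-measurable null set,
       i.e. outside a (sigma(tau) \/ F_oo)-measurable Q-null set *)
    exists C : set Omega, Tsig F tau C /\ Q C = 0%E /\
      forall w, ~ C w -> forall t : R, 0 <= t ->
        Y t w = (if (t%:E < tau w)%E then Y1 t w else Y2 (tau w) t w).

(* Main.v *)
Require Import Defs.
From HB Require Import structures.
From mathcomp Require Import all_boot all_order all_algebra.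
From mathcomp Require Import all_classical all_reals all_analysis measurable_realfun.
Import Order.TTheory GRing.Theory Num.Theory.
Import numFieldNormedType.Exports.
Local Open Scope classical_set_scope.
Local Open Scope ring_scope.

Lemma sa0 T (G : set (set T)) : sigma_algebra setT G -> G set0.
Proof. by case. Qed.
Lemma saC T (G : set (set T)) A : sigma_algebra setT G -> G A -> G (~` A).
Proof. by case=> _ hC _ hA; rewrite -setTD; apply: hC. Qed.
Lemma saT T (G : set (set T)) : sigma_algebra setT G -> G setT.
Proof. by move=> hG; rewrite -setC0; apply: saC => //; apply: sa0. Qed.
Lemma saU T (G : set (set T)) A B : sigma_algebra setT G -> G A -> G B -> G (A `|` B).
Proof.
case=> _ _ hU hA hB.
suff -> : A `|` B = \bigcup_k (fun n => if n is 0%N then A else B) k.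
  by apply: hU => -[|n].
apply/seteqP; split => x.
  by case=> h; [exists 0%N | exists 1%N].
by case=> -[|n] _ h; [left|right].
Qed.
Lemma saI T (G : set (set T)) A B : sigma_algebra setT G -> G A -> G B -> G (A `&` B).
Proof.
move=> hG hA hB; rewrite -[A]setCK -[B]setCK -setCU.
by apply: saC => //; apply: saU => //; apply: saC.
Qed.
Lemma saD T (G : set (set T)) A B : sigma_algebra setT G -> G A -> G B -> G (A `\` B).
Proof. by move=> hG hA hB; rewrite setDE; apply: saI => //; apply: saC. Qed.

Lemma opt_section (R : realType) (d : measure_display) (Omega : measurableType d)
  (F : R -> set (set Omega)) (t : R) : 0 <= t -> sigma_algebra setT (F t) ->
  forall S, optional_sigma F S -> F t [set w | S (t, w)].
Proof.
move=> t0 hF S; apply: (smallest_sub (C := sigma_algebra setT)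
  (X := [set S | F t [set w | S (t, w)]])); last first.
  move=> _ [X [B [hX [mB ->]]]] /=.
  suff -> : [set w | 0 <= t /\ B (X t w)] = [set w | B (X t w)].
    by apply: hX.2.2.
  by apply/seteqP; split => w /=; [case|].
split => /=.
- by apply: sa0.
- move=> A hA.
  suff -> : [set w | (setT `\` A) (t, w)] = ~` [set w | A (t, w)] by apply: saC.
  by apply/seteqP; split => w /=; [case|].
- move=> A hA.
  have -> : [set w | (\bigcup_k A k) (t, w)] = \bigcup_k [set w | A k (t, w)].
    by apply/seteqP; split => w /= [k _ h]; exists k.
  by case: hF => _ _ hU; apply: hU.
Qed.

Lemma prod_section (R : realType) (d : measure_display) (Omega : measurableType d)
  (F : R -> set (set Omega)) (G : set (set Omega)) (tau : Omega -> \bar R) (t : R) :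
  0 <= t -> sigma_algebra setT (F t) -> sigma_algebra setT G -> F t `<=` G ->
  G [set w | (t%:E < tau w)%E] ->
  (forall A : set (\bar R), measurable A -> G [set w | ~ (t%:E < tau w)%E /\ A (tau w)]) ->
  forall S, prod_borel_optional F S ->
    G [set w | ~ (t%:E < tau w)%E /\ S (tau w, (t, w))].
Proof.
move=> t0 hF hG hFG hlt hA S.
apply: (smallest_sub (C := sigma_algebra setT)
  (X := [set S | G [set w | ~ (t%:E < tau w)%E /\ S (tau w, (t, w))]])); last first.
  move=> _ [A [Ob [mA [hO ->]]]] /=.
  suff -> : [set w | ~ (t%:E < tau w)%E /\ A (tau w) /\ Ob (t, w)] =
     [set w | ~ (t%:E < tau w)%E /\ A (tau w)] `&` [set w | Ob (t, w)].
    apply: saI => //; first by apply: hA.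
    by apply: hFG; exact: (@opt_section _ _ _ F t t0 hF _ hO).
  apply/seteqP; split => w /=.
    by case=> h1 [h2 h3].
  by case=> -[h1 h2] h3.
split => /=.
- suff -> : [set w | ~ (t%:E < tau w)%E /\ set0 (tau w, (t, w))] = set0 by apply: sa0.
  by apply/seteqP; split => w /=; [case|].
- move=> B hB.
  suff -> : [set w | ~ (t%:E < tau w)%E /\ (setT `\` B) (tau w, (t, w))] =
    ~` [set w | (t%:E < tau w)%E] `&` ~` [set w | ~ (t%:E < tau w)%E /\ B (tau w, (t, w))].
    by apply: saI => //; apply: saC.
  apply/seteqP; split => w /=.
    by case=> h [_ hb]; split => // -[].
  by case=> h1 h2; split => //; split => // hb; apply: h2.
- move=> B hB.
  have -> : [set w | ~ (t%:E < tau w)%E /\ (\bigcup_k B k) (tau w, (t, w))] =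
     \bigcup_k [set w | ~ (t%:E < tau w)%E /\ B k (tau w, (t, w))].
    apply/seteqP; split => w /=.
      by case=> h [k _ hk]; exists k.
    by case=> k _ [h hk]; split => //; exists k.
  by case: hG => _ _ hU; apply: hU.
Qed.

Lemma saconst T (G : set (set T)) (P : Prop) : sigma_algebra setT G -> G [set _ | P].
Proof.
move=> hG; case: (pselect P) => hP.
  have -> : [set _ : T | P] = setT by apply/seteqP; split.
  exact: saT.
have -> : [set _ : T | P] = set0 by apply/seteqP; split.
exact: sa0.
Qed.

Lemma saind T U (G : set (set T)) (A : set T) (P : set U) a b :
  sigma_algebra setT G -> G A -> G [set w | P (if `[< A w >] then a else b)].
Proof.
move=> hG hA.
have -> : [set w | P (if `[< A w >] then a else b)] =
  (A `&` [set _ | P a]) `|` (~` A `&` [set _ | P b]).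
  apply/seteqP; split => w /=; case: (asboolP (A w)) => h.
  - by left.
  - by right.
  - by case=> -[].
  - by case=> -[].
apply: saU => //; apply: saI => //; try apply: saconst => //.
by apply: saC.
Qed.

Lemma nmid_inf (R : realType) (a : \bar R) (t : R) :
  (nmid a t%:E = +oo)%E <-> (t%:E < a)%E.
Proof.
rewrite /nmid; case: leP => h; split => //.
by move=> e; move: h; rewrite e leNgt ltry.
Qed.

Lemma gpre_meas (R : realType) (t : R) (B : set (\bar R)) : measurable B ->
  measurable [set x | B (if (x <= t%:E)%E then x else +oo%E)].
Proof.
move=> mB.
have -> : [set x | B (if (x <= t%:E)%E then x else +oo%E)] =
  (B `&` `]-oo, t%:E]%classic) `|` (~` `]-oo, t%:E]%classic `&` [set _ | B +oo%E]).
  apply/seteqP; split => x /=; rewrite in_itv /=; case: ifP => h.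
  - by left.
  - by right.
  - by case=> [[]|[]].
  - by case=> [[]|[]].
apply: measurableU; apply: measurableI => //.
- exact: emeasurable_itv.
- by apply: measurableC; exact: emeasurable_itv.
- case: (pselect (B +oo%E)) => hP.
    have -> : [set _ : \bar R | B +oo%E] = setT by apply/seteqP; split.
    exact: measurableT.
  have -> : [set _ : \bar R | B +oo%E] = set0 by apply/seteqP; split.
  exact: measurable0.
Qed.

Lemma step_rc (R : realType) (t c t0 : R) :
  (fun s => if t <= s then c else 0) @ t0^'+ --> (if t <= t0 then c else 0).
Proof.
have [tt0|t0t] := leP t t0.
  apply: cvg_near_cst; near=> s.
  have : t0 < s by near: s; exact: nbhs_right_gt.
  by move=> /ltW h; rewrite (le_trans tt0 h).
apply: cvg_near_cst; near=> s.
have : s < t by near: s; exact: nbhs_right_lt.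
by move=> h; rewrite leNgt h.
Unshelve. all: by end_near.
Qed.

Lemma step_ll (R : realType) (t c t0 : R) :
  cvg ((fun s => if t <= s then c else 0) @ t0^'-).
Proof.
have [tt0|t0t] := ltP t t0.
  apply: cvgP (cvg_near_cst c _); near=> s.
  have : t < s by near: s; exact: nbhs_left_gt.
  by move=> /ltW ->.
apply: cvgP (cvg_near_cst 0 _); near=> s.
have : s < t0 by near: s; exact: nbhs_left_lt.
by move=> h; rewrite leNgt (lt_le_trans h t0t).
Unshelve. all: by end_near.
Qed.

Theorem mainTheorem2 (R : realType) (d : measure_display)
  (Omega : measurableType d) (Q : probability Omega R)
  (F : R -> set (set Omega)) (tau : Omega -> \bar R)
  (hFsig : forall t, 0 <= t -> sigma_algebra setT (F t))
  (hFA : forall t, 0 <= t -> F t `<=` measurable)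
  (hFinc : forall s t, 0 <= s -> s <= t -> F s `<=` F t)
  (hFrc : forall t, 0 <= t -> F t = \bigcap_(s in `]t, +oo[%classic) F s)
  (hF0 : null_sigma Q (Finfty F) `<=` F 0)
  (htau_meas : measurable_fun setT tau)
  (htau_pos : forall w, (0 <= tau w)%E)
  (hsplit : global_optional_splitting Q F tau) :
  forall t : R, 0 <= t ->
    Gfilt Q F tau t =
    sjoin (sjoin (Nsig Q F tau) (sigma_of (fun w => nmid (tau w) t%:E))) (F t).
Proof.
move=> t t0.
set N := Nsig Q F tau.
set nm := fun w => nmid (tau w) t%:E.
set RHS := sjoin (sjoin N (sigma_of nm)) (F t).
have hRHS : sigma_algebra setT RHS by exact: smallest_sigma_algebra.
have hGt : forall u, sigma_algebra setT (Gfilt Q F tau u).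
  by move=> u; exact: smallest_sigma_algebra.
have hNR : N `<=` RHS.
  by move=> X hX; apply: sub_sigma_algebra; left; apply: sub_sigma_algebra; left.
have hSR : sigma_of nm `<=` RHS.
  by move=> X hX; apply: sub_sigma_algebra; left; apply: sub_sigma_algebra; right.
have hFR : F t `<=` RHS.
  by move=> X hX; apply: sub_sigma_algebra; right.
apply/seteqP; split; last first.
  apply: smallest_sub => //.
  move=> X [hX|hX]; last first.
    apply: sub_sigma_algebra; right => s /=; rewrite in_itv /= andbT => hs.
    apply: sub_sigma_algebra; left.
    by apply: (hFinc t s t0 (ltW hs)).
  move: X hX; apply: smallest_sub => //.
  move=> X [hX|hX].
    by apply: sub_sigma_algebra; left.
  apply: sub_sigma_algebra; right => s /=; rewrite in_itv /= andbT => hs.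
  apply: sub_sigma_algebra; right.
  case: hX => B mB <-.
  exists [set x | B (if (x <= t%:E)%E then x else +oo%E)].
    exact: gpre_meas.
  have key : forall x : \bar R, (if (x <= t%:E)%E then x else +oo%E) =
    (if (Order.min x s%:E <= t%:E)%E then Order.min x s%:E else +oo%E).
    move=> x; case: (leP x t%:E) => h.
      have hxs : (x <= s%:E)%E by apply: (le_trans h); rewrite lee_fin ltW.
      by rewrite min_l // h.
    rewrite ifF //; apply/negbTE; rewrite -ltNge lt_min h lte_fin hs.
    by [].
  by apply/seteqP; split => w /=; rewrite /nm /nmid (key (tau w)).
move=> A hA.
have hmono : forall u v, u <= v -> Gfilt Q F tau u `<=` Gfilt Q F tau v.
  move=> u v uv; apply: sub_sigma_algebra2 => X [hX|hX]; [by left|right].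
  move=> s /=; rewrite in_itv /= andbT => hs; apply: hX => /=.
  by rewrite in_itv /= andbT (le_lt_trans uv hs).
pose Y := fun (s : R) (w : Omega) => if t <= s then (if `[< A w >] then 1 else 0) else 0 : R.
have hY : is_optional (Gfilt Q F tau) Y.
  move=> B mB; apply: sub_sigma_algebra; exists Y, B; split => //.
  split; [|split].
  - by move=> w u _; rewrite /Y; exact: step_rc.
  - by move=> w u _; rewrite /Y; exact: step_ll.
  - move=> u u0 B' mB'; rewrite /Y; case: (leP t u) => htu.
      by apply: (@saind _ _ _ A B' 1 0) => //; apply: (hmono t u htu).
    exact: saconst.
have [Y1 [Y2 [hY1 [hY2 [C [hC [hQC heq]]]]]]] := hsplit Y hY.
set D1 := [set w | (t%:E < tau w)%E] `&` [set w | Y1 t w = 1].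
set D2 := [set w | ~ (t%:E < tau w)%E /\ Y2 (tau w) t w = 1].
have hAeq : A = (A `&` C) `|` ((D1 `|` D2) `\` C).
  apply/seteqP; split => w.
    move=> Aw; case: (pselect (C w)) => Cw; [by left|right; split => //].
    have := heq w Cw t t0; rewrite /Y lexx; case: (asboolP (A w)) => // _.
    by case: ifP => h e; [left; split|right; split => //; apply/negP; rewrite h].
  case=> [[]//|[hD nC]].
  have := heq w nC t t0; rewrite /Y lexx; case: (asboolP (A w)) => // nA.
  case: hD => [[/= h1 h2]|[/= h1 h2]].
    by rewrite h1 h2 => /esym/eqP; rewrite oner_eq0.
  by rewrite ifF ?h2 => [/esym/eqP|]; [rewrite oner_eq0|apply/negP].
have hCN : forall B, B `<=` C -> N B.
  by move=> B BC; apply: sub_sigma_algebra; exists C.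
have hlt : RHS [set w | (t%:E < tau w)%E].
  apply: hSR; exists [set +oo%E]; first exact: emeasurable_set1.
  by apply/seteqP; split => w /=; rewrite /nm nmid_inf.
rewrite hAeq; apply: (@saU _ _ _ _ hRHS).
  by apply: hNR; apply: hCN => w [].
apply: (@saD _ _ _ _ hRHS); last by apply: hNR; apply: hCN.
apply: (@saU _ _ _ _ hRHS).
  apply: (@saI _ _ _ _ hRHS); first exact: hlt.
  apply: hFR.
  have := @opt_section _ _ _ F t t0 (hFsig t t0) _ (hY1 [set 1] (measurable_set1 1)).
  suff -> : [set w | Y1 t w = 1] = [set w | [set p : R * Omega | 0 <= p.1 /\ [set 1] (Y1 p.1 p.2)] (t, w)] by [].
  by apply/seteqP; split => w /=; [|case].
have := @prod_section _ _ _ F RHS tau t t0 (hFsig t t0) hRHS hFR hlt _ _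
  (hY2 [set 1] (measurable_set1 1)).
have hD2 : D2 = [set w | ~ (t%:E < tau w)%E /\ (0 <= tau w)%E /\ 0 <= t /\ Y2 (tau w) t w = 1].
  apply/seteqP; split => w /=.
    by case=> h e; split => //; split => //; split.
  by case=> h [_ [_ e]].
rewrite hD2; apply.
move=> A' mA'; apply: hSR.
exists (A' `&` ~` [set +oo%E]).
  by apply: measurableI => //; apply: measurableC; exact: emeasurable_set1.
apply/seteqP; split => w /=.
  rewrite /nm => -[h1 h2].
  have h3 : ~ (t%:E < tau w)%E by move=> h; apply: h2; apply/nmid_inf.
  have hle : (tau w <= t%:E)%E by rewrite leNgt; apply/negP.
  by split => //; move: h1; rewrite /nmid hle.
case=> h3 h4.
have hle : (tau w <= t%:E)%E by rewrite leNgt; apply/negP.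
rewrite /nm /nmid hle; split => // e.
by move: hle; rewrite e leNgt ltry.
Qed.
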